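(* Let $p$ be a prime, let $U$ be an open subgroup of $S$, and let $H\neq\{t\}$ be a closed normal subgroup of $U$. Then $H$ is infinite, and $H$ contains elements of arbitrarily large depth: for every $N\ge1$ there is $h\in H$ with $h\neq t$ and $h\equiv t\pmod{t^N}$.
   Context: $S$ denotes the group, under substitution $(f\circ g)(t)=f(g(t))$, of all power series $t+\sum_{k\ge1}(a_{pk}t^{pk}+a_{pk+1}t^{pk+1})$ with coefficients in $\mathbb F_p$; it is a pro-$p$ group with the topology in which the subgroups $\{f\in S: f\equiv t\bmod t^n\}$ form a base of open neighbourhoods of the identity $t$. *)

(* Defs.v *)
From HB Require Import structures.
From mathcomp Require Import all_boot all_order all_algebra.
From Stdlib Require List.
Set Implicit Arguments. Unset Strict Implicit. Unset Printing Implicit Defensive.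
Import GRing.Theory.
Local Open Scope ring_scope.

(* formal power series with coefficients in 'F_p : n |-> coefficient of t^n *)
Definition ser (p : nat) := nat -> 'F_p.

Definition tser (p : nat) : ser p := fun n => if n == 1%N then 1 else 0.

Definition trunc (p : nat) (g : ser p) (n : nat) : {poly 'F_p} :=
  \poly_(i < n.+1) g i.

(* substitution (f o g)(t) = f(g(t)), for g with zero constant term:
   the n-th coefficient is [t^n] sum_{k<=n} f_k g(t)^k *)
Definition comp (p : nat) (f g : ser p) : ser p :=
  fun n => (\sum_(k < n.+1) f k *: (trunc g n) ^+ k)`_n.

(* the group S: t + sum_{k>=1} (a_{pk} t^{pk} + a_{pk+1} t^{pk+1}) *)
Definition inS (p : nat) (f : ser p) : Prop :=
  f 0%N = 0 /\ f 1%N = 1 /\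
  (forall n, (2 <= n)%N -> (n %% p != 0)%N -> (n %% p != 1)%N -> f n = 0).

Definition congr_mod (p : nat) (n : nat) (f g : ser p) : Prop :=
  forall i, (i < n)%N -> f i = g i.

Definition Kn (p : nat) (n : nat) (f : ser p) : Prop :=
  inS f /\ congr_mod n f (tser p).

Definition subgroupS (p : nat) (U : ser p -> Prop) : Prop :=
  (forall f, U f -> inS f) /\ U (tser p) /\
  (forall f g, U f -> U g -> U (comp f g)) /\
  (forall f g, U f -> inS g -> comp f g = tser p -> U g).

Definition open_subgroupS (p : nat) (U : ser p -> Prop) : Prop :=
  subgroupS U /\ exists n, forall f, Kn n f -> U f.

(* closed subset of S: every f in S all of whose neighbourhoods f o K_n
   meet H lies in H *)
Definition closedS (p : nat) (H : ser p -> Prop) : Prop :=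
  forall f, inS f ->
    (forall n, exists k, Kn n k /\ H (comp f k)) -> H f.

Definition normal_subgroupS (p : nat) (H U : ser p -> Prop) : Prop :=
  subgroupS H /\ (forall h, H h -> U h) /\
  (forall u v h, U u -> U v -> comp u v = tser p -> H h -> H (comp (comp u h) v)).

Definition finite_setS (p : nat) (H : ser p -> Prop) : Prop :=
  exists l : seq (ser p), forall h, H h -> List.In h l.

(* Main.v *)
Require Import Defs.
From mathcomp Require Import all_boot all_order all_algebra.
From mathcomp Require Import zify.
From Stdlib Require Import FunctionalExtensionality Classical_Prop.
From mathcomp Require Import ring.
Set Implicit Arguments. Unset Strict Implicit. Unset Printing Implicit Defensive.
Import GRing.Theory.
Local Open Scope ring_scope.

Definition eqm (R : nzSemiRingType) (n : nat) (A B : {poly R}) :=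
  forall i, (i < n)%N -> A`_i = B`_i.

Lemma eqm_refl (R : nzSemiRingType) n (A : {poly R}) : eqm n A A.
Proof. by []. Qed.
Lemma eqm_sym (R : nzSemiRingType) n (A B : {poly R}) : eqm n A B -> eqm n B A.
Proof. by move=> h i hi; rewrite h. Qed.
Lemma eqm_trans (R : nzSemiRingType) n (A B C : {poly R}) :
  eqm n A B -> eqm n B C -> eqm n A C.
Proof. by move=> h1 h2 i hi; rewrite h1 // h2. Qed.
Lemma eqm_le (R : nzSemiRingType) m n (A B : {poly R}) :
  (m <= n)%N -> eqm n A B -> eqm m A B.
Proof. by move=> hmn h i hi; apply: h; apply: leq_trans hmn. Qed.
Lemma eqmD (R : nzSemiRingType) n (A A' B B' : {poly R}) :
  eqm n A A' -> eqm n B B' -> eqm n (A + B) (A' + B').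
Proof. by move=> h1 h2 i hi; rewrite !coefD h1 // h2. Qed.
Lemma eqmZ (R : nzSemiRingType) n c (A A' : {poly R}) :
  eqm n A A' -> eqm n (c *: A) (c *: A').
Proof. by move=> h1 i hi; rewrite !coefZ h1. Qed.
Lemma eqmM (R : nzSemiRingType) n (A A' B B' : {poly R}) :
  eqm n A A' -> eqm n B B' -> eqm n (A * B) (A' * B').
Proof.
move=> h1 h2 i hi; rewrite !coefM; apply: eq_bigr => j _.
have hj : (j < n)%N by apply: leq_ltn_trans hi; rewrite -ltnS.
have hij : (i - j < n)%N by apply: leq_ltn_trans hi; rewrite leq_subr.
by rewrite h1 // h2.
Qed.
Lemma eqmX (R : nzSemiRingType) n (A A' : {poly R}) k :
  eqm n A A' -> eqm n (A ^+ k) (A' ^+ k).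
Proof.
move=> h; elim: k => [|k IH]; first by rewrite !expr0.
by rewrite !exprS; apply: eqmM.
Qed.

Lemma pow_low (R : nzSemiRingType) (Q : {poly R}) k i :
  Q`_0 = 0 -> (i < k)%N -> (Q ^+ k)`_i = 0.
Proof.
move=> h0; elim: k i => [//|k IH] i hi.
rewrite exprS coefM big1 // => [[j hj]] _ /=.
case: j hj => [|j] hj; first by rewrite h0 mul0r.
rewrite IH ?mulr0 //.
by move: hi hj; rewrite !ltnS => hi hj; lia.
Qed.

Lemma compcoef_low (R : nzSemiRingType) (P Q : {poly R}) n i :
  Q`_0 = 0 -> (i < n)%N ->
  (P \Po Q)`_i = \sum_(k < n) P`_k * (Q ^+ k)`_i.
Proof.
move=> h0 hi; rewrite coef_comp_poly.
rewrite (big_ord_widen (size P + n) (fun k => P`_k * (Q ^+ k)`_i)) ?leq_addr //.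
rewrite (big_ord_widen (size P + n) (fun k => P`_k * (Q ^+ k)`_i) (leq_addl _ _)).
rewrite big_mkcond [RHS]big_mkcond /=; apply: eq_bigr => k _.
case: ltnP => h1; case: ltnP => h2 //.
- by rewrite pow_low ?mulr0 // (leq_trans hi h2).
- by rewrite nth_default ?mul0r.
Qed.

Lemma eqm_comp (R : nzSemiRingType) n (P P' Q Q' : {poly R}) :
  eqm n P P' -> eqm n Q Q' -> Q`_0 = 0 -> Q'`_0 = 0 ->
  eqm n (P \Po Q) (P' \Po Q').
Proof.
move=> hP hQ h0 h0' i hi; rewrite (compcoef_low P h0 hi) (compcoef_low P' h0' hi).
by apply: eq_bigr => k _; rewrite hP // (eqmX k hQ).
Qed.

Lemma coef_trunc p (g : ser p) n i : (trunc g n)`_i = if (i <= n)%N then g i else 0.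
Proof. by rewrite /trunc coef_poly ltnS. Qed.

Lemma compE p (f g : ser p) n : Defs.comp f g n = (trunc f n \Po trunc g n)`_n.
Proof.
rewrite /Defs.comp; apply: (congr1 (fun P : {poly _} => P`_n)).
rewrite [X in _ = X \Po _]/trunc poly_def.
rewrite (big_morph (fun P => P \Po trunc g n) (fun a b => comp_polyD a b _) (comp_poly0 _)).
by apply: eq_bigr => k _; rewrite comp_polyZ comp_Xn_poly.
Qed.

Lemma compP p (f g : ser p) n (F G : {poly 'F_p}) :
  g 0%N = 0 -> G`_0 = 0 ->
  (forall i, (i <= n)%N -> F`_i = f i) -> (forall i, (i <= n)%N -> G`_i = g i) ->
  Defs.comp f g n = (F \Po G)`_n.
Proof.
move=> g0 G0 hF hG; rewrite compE; apply: (@eqm_comp _ n.+1) => //.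
- by move=> i hi; rewrite coef_trunc -ltnS hi hF.
- by move=> i hi; rewrite coef_trunc -ltnS hi hG.
- by rewrite coef_trunc.
Qed.

Local Notation cmp := Defs.comp.

Lemma comp_coef0 (R : nzSemiRingType) (P Q : {poly R}) :
  Q`_0 = 0 -> (P \Po Q)`_0 = P`_0.
Proof.
move=> h0; rewrite (@compcoef_low _ P Q 1 0) // big_ord1 expr0 coef1 mulr1 //.
Qed.

Lemma cmp0 p (f g : ser p) : g 0%N = 0 -> cmp f g 0%N = f 0%N.
Proof. by move=> g0; rewrite compE comp_coef0 !coef_trunc // coef_trunc. Qed.

Lemma trunc_cmp p (f g : ser p) m : g 0%N = 0 ->
  eqm m.+1 (trunc (cmp f g) m) (trunc f m \Po trunc g m).
Proof.
move=> g0 i; rewrite ltnS => hi; rewrite coef_trunc hi.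
apply: compP => //; first by rewrite coef_trunc.
- by move=> j hj; rewrite coef_trunc (leq_trans hj hi).
- by move=> j hj; rewrite coef_trunc (leq_trans hj hi).
Qed.

Lemma cmpA p (f g h : ser p) : g 0%N = 0 -> h 0%N = 0 ->
  cmp (cmp f g) h = cmp f (cmp g h).
Proof.
move=> g0 h0; apply: functional_extensionality => n.
have Hh0 : (trunc h n)`_0 = 0 by rewrite coef_trunc.
have Gh0 : (trunc g n)`_0 = 0 by rewrite coef_trunc.
rewrite !compE.
rewrite (@eqm_comp _ n.+1 _ (trunc f n \Po trunc g n) (trunc h n) (trunc h n)) //.
- rewrite (@eqm_comp _ n.+1 (trunc f n) (trunc f n) _ (trunc g n \Po trunc h n)) //.
  + by rewrite comp_polyA.
  + exact: trunc_cmp.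
  + by rewrite coef_trunc cmp0.
  + by rewrite comp_coef0.
- exact: trunc_cmp.
Qed.

Lemma cmp_tl p (g : ser p) : g 0%N = 0 -> cmp (tser p) g = g.
Proof.
move=> g0; apply: functional_extensionality => n.
rewrite (@compP p _ _ n 'X (trunc g n)) //.
- by rewrite comp_polyX coef_trunc leqnn.
- by rewrite coef_trunc.
- by move=> i _; rewrite coefX /tser; case: (i == 1%N).
- by move=> i hi; rewrite coef_trunc hi.
Qed.

Lemma cmp_tr p (f : ser p) : cmp f (tser p) = f.
Proof.
apply: functional_extensionality => n.
rewrite (@compP p _ _ n (trunc f n) 'X) //.
- by rewrite comp_polyXr coef_trunc leqnn.
- by rewrite coefX.
- by move=> i hi; rewrite coef_trunc hi.
- by move=> i _; rewrite coefX /tser; case: (i == 1%N).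
Qed.

Lemma cmp_congr p N (a b c d : ser p) :
  congr_mod N a b -> congr_mod N c d -> congr_mod N (cmp a c) (cmp b d).
Proof.
move=> hab hcd n hn; rewrite !compE.
have -> : trunc a n = trunc b n.
  by apply/polyP => i; rewrite !coef_trunc; case: ifP => // hi; apply: hab; apply: leq_ltn_trans hn.
have -> : trunc c n = trunc d n.
  by apply/polyP => i; rewrite !coef_trunc; case: ifP => // hi; apply: hcd; apply: leq_ltn_trans hn.
by [].
Qed.

Lemma dvd_consec p i : (1 < p)%N -> (p %| i.+1)%N -> (p %| i)%N -> False.
Proof. move=> hp; rewrite -addn1 => h1 h2; move: h1; rewrite (dvdn_addr _ h2) dvdn1 => /eqP e; by rewrite e in hp. Qed.
Lemma modS1 p i : (1 < p)%N -> (i.+1 %% p == 1)%N = (p %| i)%N.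
Proof. move=> hp. rewrite -[X in (_ == X)%N](modn_small hp) -(addn1 i) -[X in (_ == X %% _)%N](add0n 1%N) eqn_modDr mod0n. by rewrite eq_sym. Qed.

Definition Pform p (P : {poly 'F_p}) := forall i, ~~ (p %| i)%N -> P`_i = 0.
Definition Sform p (P : {poly 'F_p}) :=
  forall i, (2 <= i)%N -> (i %% p != 0)%N -> (i %% p != 1)%N -> P`_i = 0.

Lemma PformC p c : Pform (c%:P : {poly 'F_p}).
Proof. move=> i h; rewrite coefC; case: i h => // h; by rewrite dvdn0 in h. Qed.
Lemma PformD p (A B : {poly 'F_p}) : Pform A -> Pform B -> Pform (A + B).
Proof. by move=> hA hB i hi; rewrite coefD hA // hB // addr0. Qed.
Lemma PformZ p c (A : {poly 'F_p}) : Pform A -> Pform (c *: A).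
Proof. by move=> hA i hi; rewrite coefZ hA // mulr0. Qed.
Lemma PformM p (A B : {poly 'F_p}) : Pform A -> Pform B -> Pform (A * B).
Proof.
move=> hA hB i hi; rewrite coefM big1 // => [[j hj]] _ /=.
case hpj: (p %| j)%N; last by rewrite hA ?hpj // mul0r.
rewrite hB ?mulr0 //; apply: contra hi => h.
by rewrite -(subnK (_ : j <= i)%N) ?dvdn_add // -ltnS.
Qed.
Lemma PformX p (A : {poly 'F_p}) k : Pform A -> Pform (A ^+ k).
Proof.
move=> hA; elim: k => [|k IH]; first by rewrite expr0 -polyC1; apply: PformC.
by rewrite exprS; apply: PformM.
Qed.
Lemma Pform_sum p (I : Type) (r : seq I) (F : I -> {poly 'F_p}) :
  (forall i, Pform (F i)) -> Pform (\sum_(i <- r) F i).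
Proof.
move=> h; apply: (big_ind (fun P => Pform P)) => //; first by rewrite -polyC0; apply: PformC.
by move=> x y; apply: PformD.
Qed.

Lemma frobD p (a b : {poly 'F_p}) : prime p -> (a + b) ^+ p = a ^+ p + b ^+ p.
Proof.
move=> hp.
have chP : p \in [pchar {poly 'F_p}] by rewrite (pchar_poly _ p) pchar_Fp.
by rewrite -!(pFrobenius_autE chP) rmorphD.
Qed.

Lemma Pform_powp p (Q : {poly 'F_p}) : prime p -> Pform (Q ^+ p).
Proof.
move=> hp; elim/poly_ind: Q => [|Q c IH].
  by rewrite expr0n; case: (p == 0%N); rewrite -?polyC1 -?polyC0; apply: PformC.
rewrite frobD // exprMn -polyC_exp; apply: PformD; last exact: PformC.
apply: PformM => // i hi; rewrite coefXn; case: eqP => // e.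
by move: hi; rewrite e dvdnn.
Qed.

Lemma Pform_comp p (B Q : {poly 'F_p}) : prime p -> Pform B -> Pform (B \Po Q).
Proof.
move=> hp hB; rewrite comp_polyE; apply: Pform_sum => k.
case hk: (p %| k)%N; last by rewrite hB ?hk // scale0r -polyC0; apply: PformC.
apply: PformZ; rewrite -(divnK hk) mulnC exprM; apply: PformX; exact: Pform_powp.
Qed.

Lemma Sform_of p (P0 P1 : {poly 'F_p}) : prime p ->
  Pform P0 -> Pform P1 -> Sform (P0 + 'X * P1).
Proof.
move=> hp h0 h1 [|[|i]] // _ hi0 hi1.
rewrite coefD coefXM /= h0 // h1 ?addr0 //.
by rewrite -(modS1 _ (prime_gt1 hp)).
Qed.

Lemma Sform_split p (P : {poly 'F_p}) : prime p -> Sform P ->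
  exists P0 P1, [/\ Pform P0, Pform P1 & P = P0 + 'X * P1].
Proof.
move=> hp hP; have hp1 := prime_gt1 hp.
exists (\poly_(i < size P) (if (p %| i)%N then P`_i else 0)),
       (\poly_(i < size P) (if (p %| i)%N then P`_i.+1 else 0)).
split.
- by move=> i hi; rewrite coef_poly (negbTE hi) if_same.
- by move=> i hi; rewrite coef_poly (negbTE hi) if_same.
apply/polyP => i; rewrite coefD coefXM !coef_poly.
case: i => [|i] /=.
  rewrite dvdn0 addr0; case: ltnP => // h; by rewrite nth_default.
case: (ltnP i.+1 (size P)) => hs; last first.
  by rewrite (nth_default _ hs) !if_same add0r.
have hs' : (i < size P)%N by apply: ltnW.
rewrite hs'.
case h1: (p %| i.+1)%N; case h2: (p %| i)%N.
- by case: (dvd_consec hp1 h1 h2).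
- by rewrite addr0.
- by rewrite add0r.
- rewrite addr0 hP //; first by case: i h2 {hs hs'} h1 => //; rewrite dvdn0.
  + exact: negbT h1.
  + by move: (modS1 i hp1); rewrite h2 => ->.
Qed.

Lemma Sform_comp p (P Q : {poly 'F_p}) : prime p -> Sform P -> Sform Q -> Sform (P \Po Q).
Proof.
move=> hp hP hQ.
have [P0 [P1 [h0 h1 ->]]] := Sform_split hp hP.
have [Q0 [Q1 [k0 k1 eQ]]] := Sform_split hp hQ.
rewrite comp_polyD comp_polyM comp_polyX.
have -> : P0 \Po Q + Q * (P1 \Po Q) =
   (P0 \Po Q + Q0 * (P1 \Po Q)) + 'X * (Q1 * (P1 \Po Q)).
  by rewrite {2}eQ mulrDl addrA mulrA.
apply: Sform_of => //.
- by apply: PformD; [apply: Pform_comp | apply: PformM => //; apply: Pform_comp].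
- by apply: PformM => //; apply: Pform_comp.
Qed.

Lemma keyM (R : comNzRingType) (G E : {poly R}) n k :
  (0 < n)%N -> eqm n.+1 (E * E) 0 ->
  eqm n.+1 ((G + E) ^+ k.+1) (G ^+ k.+1 + k.+1%:R * E * G ^+ k).
Proof.
move=> hn hE; elim: k => [|k IH].
  by rewrite !expr1 expr0 mulr1 mul1r.
rewrite exprSr.
apply: (eqm_trans (eqmM IH (@eqm_refl _ n.+1 (G + E)))).
have -> : (G ^+ k.+1 + k.+1%:R * E * G ^+ k) * (G + E) =
   (G ^+ k.+2 + k.+2%:R * E * G ^+ k.+1) + (k.+1%:R * G ^+ k) * (E * E).
  by rewrite !exprS -[k.+2]addn1 -[k.+1]addn1 !natrD; ring.
rewrite -[X in eqm _ _ X]addr0; apply: eqmD => //.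
move=> i hi; rewrite coef0 coefM big1 // => [[j hj]] _ /=.
by rewrite hE ?coef0 ?mulr0 // (leq_ltn_trans (leq_subr _ _) hi).
Qed.

Lemma key_coef p (F G : {poly 'F_p}) c n :
  (0 < n)%N -> G`_0 = 0 ->
  (F \Po (G + c *: 'X^n))`_n = (F \Po G)`_n + c * F`_1.
Proof.
move=> hn G0.
have hE : eqm n.+1 (c *: 'X^n * (c *: 'X^n)) 0.
  move=> i hi; rewrite coef0 -scalerAr -scalerAl coefZ coefZ coefXnM.
  case: ltnP => h; first by rewrite !mulr0.
  have ein : i = n by apply/eqP; rewrite eqn_leq h -ltnS hi.
  rewrite ein subnn coefXn; case: n hn {hi h ein} => // n _.
  by rewrite /= mulr0n !mulr0.
have n0 : (0 == n)%N = false by rewrite eq_sym; apply/negbTE; rewrite -lt0n.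
have n0' : (n == 0)%N = false by rewrite eq_sym.
have E0 : (G + c *: 'X^n)`_0 = 0 by rewrite coefD coefZ coefXn G0 n0 /= mulr0n mulr0 add0r.
have hk : forall k, ((G + c *: 'X^n) ^+ k)`_n = (G ^+ k)`_n + (k == 1%N)%:R * c.
  case=> [|k]; first by rewrite !expr0 coef1 n0' /= mul0r addr0.
  rewrite (@keyM _ G (c *: 'X^n) n k hn hE) // coefD -mulrA mulr_natl coefMn -scalerAl coefZ coefXnM ltnn subnn.
  case: k => [|k]; first by rewrite expr0 coef1 /= mulr1 mul1r.
  by rewrite [X in c * X]pow_low // mulr0 mul0rn /= mul0r.
rewrite (compcoef_low F E0 (ltnSn n)) (compcoef_low F G0 (ltnSn n)).
under eq_bigr => k _ do rewrite hk mulrDr.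
rewrite big_split /=; congr (_ + _).
case: n hn {hE E0 hk n0 n0'} => // n _.
rewrite big_ord_recl big_ord_recl big1 => [|i _]; last by rewrite /= mul0r mulr0.
by rewrite /= mul0r mulr0 add0r addr0 mul1r mulrC.
Qed.

Definition nextc p (f : ser p) (s : seq 'F_p) : 'F_p :=
  if size s is 0 then 0
  else tser p (size s) - (trunc f (size s) \Po Poly s)`_(size s).
Fixpoint gl p (f : ser p) (n : nat) : seq 'F_p :=
  if n is n'.+1 then rcons (gl f n') (nextc f (gl f n')) else [::].
Definition ginv p (f : ser p) : ser p := fun n => nth 0 (gl f n.+1) n.

Lemma size_gl p (f : ser p) n : size (gl f n) = n.
Proof. by elim: n => //= n IH; rewrite size_rcons IH. Qed.

Lemma gl_nth p (f : ser p) n i : (i < n)%N -> nth 0 (gl f n) i = ginv f i.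
Proof.
elim: n => // n IH hi; rewrite /= nth_rcons size_gl.
case: ltnP => h; first by rewrite IH.
have ei : i = n by apply/eqP; rewrite eqn_leq h -ltnS hi.
by rewrite ei eqxx /ginv /= nth_rcons size_gl ltnn eqxx.
Qed.

Lemma coef_Pgl p (f : ser p) n i :
  (Poly (gl f n))`_i = if (i < n)%N then ginv f i else 0.
Proof.
rewrite coef_Poly; case: ltnP => h; first by rewrite gl_nth.
by rewrite nth_default // size_gl.
Qed.

Lemma ginvE p (f : ser p) n : (0 < n)%N ->
  ginv f n = tser p n - (trunc f n \Po Poly (gl f n))`_n.
Proof.
move=> hn; rewrite /ginv /= nth_rcons size_gl ltnn eqxx /nextc size_gl.
by case: n hn.
Qed.

Lemma ginv0 p (f : ser p) : ginv f 0%N = 0.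
Proof. by []. Qed.

Lemma cmp_ginv p (f : ser p) : f 0%N = 0 -> f 1%N = 1 -> cmp f (ginv f) = tser p.
Proof.
move=> f0 f1; apply: functional_extensionality => n.
case: n => [|n]; first by rewrite cmp0 // f0.
rewrite compE.
have -> : trunc (ginv f) n.+1 = Poly (gl f n.+1) + ginv f n.+1 *: 'X^(n.+1).
  apply/polyP => i; rewrite coefD coef_trunc coef_Pgl coefZ coefXn.
  case: ltngtP => h.
  - by rewrite mulr0n mulr0 addr0.
  - by rewrite mulr0n mulr0 addr0.
  - by rewrite mulr1n mulr1 add0r h.
rewrite key_coef //; last by rewrite coef_Pgl.
by rewrite coef_trunc f1 mulr1 (ginvE f (ltn0Sn n)) addrC subrK.
Qed.

Lemma Sform_trunc p (f : ser p) n : inS f -> Sform (trunc f n).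
Proof.
move=> [_ [_ hf]] i h2 h0 h1; rewrite coef_trunc; case: ifP => // _; exact: hf.
Qed.

Lemma inS_ginv p (f : ser p) : prime p -> inS f -> inS (ginv f).
Proof.
move=> hp hf; have [f0 [f1 hf']] := hf.
split; first by [].
split.
  rewrite ginvE //.
  have -> : Poly (gl f 1) = 0 by apply/polyP => i; rewrite coef_Pgl coef0; case: i.
  by rewrite comp_poly0r coefC /= subr0.
have main : forall N i, (i < N)%N -> (2 <= i)%N -> (i %% p != 0)%N -> (i %% p != 1)%N -> ginv f i = 0.
  elim=> // N IH i hi h2 h0 h1.
  case: (ltnP i N) => h; first exact: IH.
  have ei : i = N by apply/eqP; rewrite eqn_leq h -ltnS hi.
  rewrite ei in h2 h0 h1 *.
  rewrite ginvE; last by apply: leq_trans h2.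
  have -> : tser p N = 0 by rewrite /tser; case: eqP => // e; rewrite e in h2.
  rewrite (@Sform_comp p (trunc f N) (Poly (gl f N)) hp (Sform_trunc N hf)) ?subr0 //.
  by move=> j j2 j0 j1; rewrite coef_Pgl; case: ifP => // hj; apply: IH.
by move=> n h2 h0 h1; apply: (main n.+1).
Qed.

Lemma right_inv p (f : ser p) : prime p -> inS f -> exists g, inS g /\ cmp f g = tser p.
Proof.
move=> hp hf; exists (ginv f); split; first exact: inS_ginv.
by case: hf => [f0 [f1 _]]; apply: cmp_ginv.
Qed.

Lemma left_inv p (f g : ser p) : prime p -> inS f -> inS g -> cmp f g = tser p -> cmp g f = tser p.
Proof.
move=> hp hf hg e.
have [g' [hg' e']] := right_inv hp hg.
have -> : f = g'.
  rewrite -(cmp_tr f) -e' -cmpA; first by rewrite e cmp_tl //; case: hg' => [-> _].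
  - by case: hg => [-> _].
  - by case: hg' => [-> _].
by [].
Qed.

Definition kser p (r : nat) : ser p :=
  fun n => if n == 1%N then 1 else if n == r then 1 else 0.

Lemma eqm_sq1 p j (C : {poly 'F_p}) : (0 < j)%N -> eqm j.+1 ('X^j * C * ('X^j * C)) 0.
Proof.
move=> hj i hi; rewrite coef0 -mulrA coefXnM; case: ltnP => // h.
have ei : i = j by apply/eqP; rewrite eqn_leq h -ltnS hi.
by rewrite ei subnn mulrCA coefXnM hj.
Qed.

Lemma pow1E p j (C : {poly 'F_p}) e : (0 < j)%N ->
  eqm j.+1 ((1 + 'X^j * C) ^+ e) (1 + e%:R * ('X^j * C)).
Proof.
move=> hj; case: e => [|e]; first by rewrite expr0 mul0r addr0.
apply: (eqm_trans (@keyM _ 1 ('X^j * C) j e hj (eqm_sq1 C hj))).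
by rewrite !expr1n mulr1.
Qed.

Lemma Kcoef p r i : (1 < r)%N -> ('X + 'X^r : {poly 'F_p})`_i = kser p r i.
Proof.
move=> hr; rewrite coefD coefX coefXn /kser.
have [e|ne] := eqVneq i 1%N.
  subst i; have -> : (1 == r)%N = false by lia.
  by rewrite /= mulr0n addr0.
by have [e2|ne2] := eqVneq i r; rewrite /= ?mulr0n ?mulr1n ?add0r ?addr0.
Qed.

Lemma side1 p (h : ser p) m1 r1 :
  h 0%N = 0 -> h 1%N = 1 -> (forall i, (2 <= i)%N -> (i < m1.+1)%N -> h i = 0) ->
  (0 < m1)%N -> (m1 < r1)%N ->
  cmp (kser p r1.+1) h (m1 + r1.+1)%N = h (m1 + r1.+1)%N + h m1.+1 *+ r1.+1.
Proof.
move=> h0 h1 hz hm hmr.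
set n := (m1 + r1.+1)%N.
set B : {poly 'F_p} := \poly_(i < r1.+1) h (i + m1.+1)%N.
have HpE : forall i, (i <= n)%N -> ('X + 'X^(m1.+1) * B)`_i = h i.
  move=> i hi; rewrite coefD coefX coefXnM coef_poly.
  case: (ltnP i m1.+1) => him.
    case: i hi him => [|[|i]] hi him; rewrite ?h0 ?h1 //= ?addr0 //.
    by rewrite hz.
  rewrite /n in hi.
  have -> : (i - m1.+1 < r1.+1)%N by lia.
  have -> : (i == 1%N) = false by lia.
  by rewrite subnK // mulr0n add0r.
have Hp0 : ('X + 'X^(m1.+1) * B)`_0 = 0 by rewrite HpE.
rewrite (@compP p _ _ n ('X + 'X^(r1.+1)) ('X + 'X^(m1.+1) * B)) //; last first.
  by move=> i _; apply: Kcoef; lia.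
  rewrite comp_polyD comp_polyX comp_Xn_poly coefD HpE //; congr (_ + _).
have -> : 'X + 'X^(m1.+1) * B = 'X * (1 + 'X^m1 * B) by rewrite mulrDr mulr1 mulrA -exprS.
rewrite exprMn coefXnM ltnNge leq_addl /= -addnBA // subnn addn0.
rewrite (pow1E B r1.+1 hm) // coefD coef1 mulr_natl coefMn coefXnM ltnn subnn.
rewrite coef_poly /= add0n.
by case: m1 hm {n HpE Hp0 hz hmr B} => // m1 _; rewrite add0r.
Qed.

Lemma side2 p (h : ser p) m1 r1 :
  h 0%N = 0 -> h 1%N = 1 -> (forall i, (2 <= i)%N -> (i < m1.+1)%N -> h i = 0) ->
  (0 < m1)%N -> (m1 < r1)%N ->
  cmp h (kser p r1.+1) (m1 + r1.+1)%N = h (m1 + r1.+1)%N + h m1.+1 *+ m1.+1.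
Proof.
move=> h0 h1 hz hm hmr.
set n := (m1 + r1.+1)%N.
set B : {poly 'F_p} := \poly_(i < r1.+1) h (i + m1.+1)%N.
have HpE : forall i, (i <= n)%N -> ('X + 'X^(m1.+1) * B)`_i = h i.
  move=> i hi; rewrite coefD coefX coefXnM coef_poly.
  case: (ltnP i m1.+1) => him.
    case: i hi him => [|[|i]] hi him; rewrite ?h0 ?h1 //= ?addr0 //.
    by rewrite hz.
  rewrite /n in hi.
  have -> : (i - m1.+1 < r1.+1)%N by lia.
  have -> : (i == 1%N) = false by lia.
  by rewrite subnK // mulr0n add0r.
have hr : (1 < r1.+1)%N by lia.
have K0 : ('X + 'X^(r1.+1) : {poly 'F_p})`_0 = 0 by rewrite Kcoef.
rewrite (@compP p _ _ n ('X + 'X^(m1.+1) * B) ('X + 'X^(r1.+1))) //; last first.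
  by move=> i _; apply: Kcoef.
rewrite comp_polyD comp_polyX comp_polyM comp_Xn_poly coefD Kcoef //.
have -> : kser p r1.+1 n = 0.
  rewrite /kser; have -> : (n == 1%N) = false by rewrite /n; lia.
  by have -> : (n == r1.+1) = false by rewrite /n; lia.
rewrite add0r.
have -> : ('X + 'X^(r1.+1) : {poly 'F_p}) = 'X * (1 + 'X^r1 * 1) by rewrite mulr1 mulrDr mulr1 -exprS.
rewrite exprMn -mulrA coefXnM.
have -> : (n < m1.+1)%N = false by rewrite /n; lia.
have -> : (n - m1.+1 = r1)%N by rewrite /n; lia.
have hr1 : (0 < r1)%N by lia.
have e1 := @pow1E p r1 1 m1.+1 hr1.
have e2 : eqm r1.+1 (B \Po ('X * (1 + 'X^r1 * 1))) (B \Po 'X).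
  apply: eqm_comp => //.
  - move=> i hi; rewrite mulr1 mulrDr mulr1 -exprS coefD coefXn.
    rewrite (_ : (i == r1.+1) = false); last by lia.
    by rewrite mulr0n addr0.
  - by rewrite coefXM.
  - by rewrite coefX.
rewrite (eqmM e1 e2) // comp_polyXr mulrDl mul1r coefD mulr1 -mulrA mulr_natl coefMn coefXnM ltnn subnn.
rewrite /B !coef_poly ltnSn ltn0Sn add0n.
by rewrite (_ : (r1 + m1.+1 = m1 + r1.+1)%N) //; lia.
Qed.

Lemma Fp_nat_ne p (m r : nat) : prime p ->
  (m %% p == 0)%N || (m %% p == 1)%N -> (r %% p == 0)%N || (r %% p == 1)%N ->
  (m %% p != r %% p)%N -> (m%:R : 'F_p) != r%:R.
Proof.
move=> hp hm hr hne; rewrite -(Fp_nat_mod hp m) -(Fp_nat_mod hp r).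
move: hne; case/orP: hm => /eqP ->; case/orP: hr => /eqP -> //= _; rewrite ?oner_neq0 // eq_sym oner_neq0.
Qed.

Lemma inS0 p (f : ser p) : inS f -> f 0%N = 0.
Proof. by case. Qed.

Lemma congr_trans p N (a b c : ser p) : congr_mod N a b -> congr_mod N b c -> congr_mod N a c.
Proof. by move=> h1 h2 i hi; rewrite h1 // h2. Qed.
Lemma congr_sym p N (a b : ser p) : congr_mod N a b -> congr_mod N b a.
Proof. by move=> h1 i hi; rewrite h1. Qed.
Lemma congr_le p M N (a b : ser p) : (M <= N)%N -> congr_mod N a b -> congr_mod M a b.
Proof. by move=> hMN h1 i hi; apply: h1; apply: leq_trans hMN. Qed.

Lemma ne_exists p (h : ser p) : h <> tser p -> exists i, h i != tser p i.
Proof.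
move=> hne; case: (Classical_Prop.classic (exists i, h i != tser p i)) => // hn.
exfalso; apply: hne; apply: functional_extensionality => i.
case: (Classical_Prop.classic (h i = tser p i)) => // hi; exfalso; apply: hn.
by exists i; apply/eqP.
Qed.

Lemma deep p (U H : ser p -> Prop) h :
  prime p -> open_subgroupS U -> normal_subgroupS H U -> H h -> h <> tser p ->
  forall N, exists h', H h' /\ h' <> tser p /\ congr_mod N h' (tser p).
Proof.
move=> hp [[US [Ut [Ucomp Uinv]]] [n0 hn0]] [[HS [Ht [Hcomp Hinv]]] [HU Hnorm]] hh hne N.
have hp1 := prime_gt1 hp.
have hS : inS h by apply: HS.
have [h0 [h1 hbad]] := hS.
have hex := ne_exists hne.
case: (ex_minnP hex) => m hm hmin.
have hlow : forall i, (i < m)%N -> h i = tser p i.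
  move=> i hi; case: (Classical_Prop.classic (h i = tser p i)) => // e.
  by have := hmin i (introN eqP e); rewrite leqNgt hi.
case: m hm hmin hlow => [|[|m1]] hm hmin hlow.
  - by case/negP: hm; rewrite h0 (_ : tser p 0 = 0).
  - by case/negP: hm; rewrite h1 (_ : tser p 1 = 1).
have hm1 : (0 < m1.+1)%N by [].
set m := m1.+2.
have tm : tser p m = 0 by rewrite /tser.
have hma : h m != 0 by rewrite -tm.
have hmp : (m %% p == 0)%N || (m %% p == 1)%N.
  case: (orP (orbN (m %% p == 0)%N)) => [->//|h0'].
  case: (orP (orbN (m %% p == 1)%N)) => [->|h1']; first by rewrite orbT.
  by move: hma; rewrite hbad.
have hz : forall i, (2 <= i)%N -> (i < m1.+2)%N -> h i = 0.
  by move=> i i2 im; rewrite hlow // /tser; case: eqP => // e; rewrite e in i2.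
set L := (N + n0 + m).+1.
set r := (p * L + (if (m %% p == 0)%N then 1 else 0))%N.
have hrp : (r %% p = if (m %% p == 0)%N then 1 else 0)%N.
  by rewrite /r mulnC modnMDl; case: ifP => _; rewrite ?mod0n ?modn_small.
have hrL : (2 * L <= r)%N.
  by rewrite /r; apply: leq_trans (leq_addr _ _); rewrite leq_mul2r hp1 orbT.
have hrgood : (r %% p == 0)%N || (r %% p == 1)%N by rewrite hrp; case: ifP.
have hrne : (m %% p != r %% p)%N.
  by rewrite hrp; case: ifP => e; [rewrite (eqP e) | rewrite e].
have [r1 er] : exists r1, r = r1.+1 by exists r.-1; rewrite prednK // (leq_trans _ hrL) // /L; lia.
have hr1 : (m1.+1 < r1)%N by move: hrL; rewrite er /L /m; lia.
have hNr : (N <= r1.+1)%N by move: hrL; rewrite er /L /m; lia.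
have hn0r : (n0 <= r1.+1)%N by move: hrL; rewrite er /L /m; lia.
rewrite er in hrgood hrne.
set k := kser p r1.+1.
have kt : congr_mod r1.+1 k (tser p).
  move=> i hi; rewrite /k /kser /tser; case: eqP => // _.
  by rewrite (_ : (i == r1.+1) = false) //; lia.
have kS : inS k.
  split; first by rewrite /k /kser.
  split; first by rewrite /k /kser.
  move=> i i2 ip0 ip1; rewrite /k /kser.
  rewrite (_ : (i == 1%N) = false); last by lia.
  case: eqP => // ei; move: hrgood; rewrite -ei; by rewrite (negbTE ip0) (negbTE ip1).
have kU : U k by apply: hn0; split => //; apply: congr_le hn0r kt.
have [kinv [kinvS kkinv]] := right_inv hp kS.
have kinvU : U kinv by apply: (Uinv k).
have [hinv [hinvS hhinv]] := right_inv hp hS.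
have hinvH : H hinv by apply: (Hinv h).
set x := cmp (cmp k h) kinv.
have xH : H x by apply: Hnorm.
have k0 := inS0 kS; have ki0 := inS0 kinvS; have hi0 := inS0 hinvS.
exists (cmp x hinv); split; first by apply: Hcomp.
split; last first.
  apply: (congr_le hNr).
  have c1 : congr_mod r1.+1 (cmp k h) h.
    by rewrite -{2}(cmp_tl h0); apply: cmp_congr.
  have c2 : congr_mod r1.+1 (cmp h k) h.
    by rewrite -{2}(cmp_tr h); apply: cmp_congr.
  have c3 : congr_mod r1.+1 x h.
    have -> : h = cmp (cmp h k) kinv by rewrite cmpA // kkinv cmp_tr.
    apply: cmp_congr => //; exact: congr_trans c1 (congr_sym c2).
  rewrite -hhinv; exact: cmp_congr.
move=> ey.
have hinvh := left_inv hp hS hinvS hhinv.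
have kinvk := left_inv hp kS kinvS kkinv.
have xh : x = h by rewrite -(cmp_tr x) -hinvh -cmpA // ey cmp_tl.
have comm : cmp k h = cmp h k.
  by rewrite -[in RHS]xh /x cmpA // kinvk cmp_tr.
have e := congr1 (fun f => f (m1.+1 + r1.+1)%N) comm; move: e => /=.
rewrite /k side1 // side2 // => /addrI.
move=> e.
have : h m * r1.+1%:R = h m * m%:R by rewrite !mulr_natr.
move=> /(mulfI hma) /eqP; apply/negP.
rewrite eq_sym; apply: Fp_nat_ne => //.
Qed.

Lemma depth_list p (l : seq (ser p)) :
  exists N, forall g, List.In g l -> g <> tser p -> ~ congr_mod N g (tser p).
Proof.
elim: l => [|g l [N IH]]; first by exists 0%N.
case: (Classical_Prop.classic (g = tser p)) => [eg|neg].
  exists N => g' [<-|hin] //; exact: IH.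
have [i hi] := ne_exists neg.
exists (maxn N i.+1) => g' [<-|hin] hne hc.
  by move: hi; rewrite hc ?eqxx // leq_max ltnSn orbT.
by apply: (IH g' hin hne); apply: congr_le hc; apply: leq_maxl.
Qed.

Local Close Scope ring_scope.
Unset Implicit Arguments.

Theorem proposition5p6 (p : nat) (U H : ser p -> Prop) :
  prime p ->
  open_subgroupS U ->
  closedS H ->
  normal_subgroupS H U ->
  (exists h, H h /\ h <> tser p) ->
  ~ finite_setS H /\
  (forall N, (1 <= N)%N -> exists h, H h /\ h <> tser p /\ congr_mod N h (tser p)).
Proof.
move=> hp hU hC hN [h [hh hne]].
have deepN := deep hp hU hN hh hne.
split; last by move=> N _; apply: deepN.
move=> [l hl]; have [N hN'] := depth_list l.
have [g [gH [gne gc]]] := deepN N.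
exact: (hN' g (hl g gH) gne gc).
Qed.
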